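(* Let $\mathbb{X},\mathbb{Y},\mathbb{Z}$ be finite-dimensional real Euclidean spaces, $f_1:\mathbb{Y}\to(-\infty,+\infty]$ and $f_2:\mathbb{Z}\to(-\infty,+\infty]$ proper closed convex functions, $B_1:\mathbb{Y}\to\mathbb{X}$, $B_2:\mathbb{Z}\to\mathbb{X}$ linear, $c\in\mathbb{X}$, $\sigma>0$, and consider the problem $\min\{f_1(y)+f_2(z): B_1y+B_2z=c\}$ with augmented Lagrangian $L_\sigma(y,z;x)=f_1(y)+f_2(z)+\langle x,B_1y+B_2z-c\rangle+\frac{\sigma}{2}\|B_1y+B_2z-c\|^2$. Assume $\partial f_1+\sigma B_1^*B_1$ and $\partial f_2+\sigma B_2^*B_2$ are maximal and strongly monotone. Let $(y^0,z^0,x^0)\in\operatorname{dom}f_1\times\operatorname{dom}f_2\times\mathbb{X}$. Algorithm I (HPR without proximal terms): set $\tilde x^0=x^0$ and for $k\ge0$: $z^{k+1}=\arg\min_z L_\sigma(y^k,z;\tilde x^k)$; $x^{k+1/2}=\tilde x^k+\sigma(B_1y^k+B_2z^{k+1}-c)$; $y^{k+1}=\arg\min_y L_\sigma(y,z^{k+1};x^{k+1/2})$; $x^{k+1}=x^{k+1/2}+\sigma(B_1y^{k+1}+B_2z^{k+1}-c)$; $\tilde x^{k+1}=\frac{1}{k+2}\tilde x^0+\frac{k+1}{k+2}x^{k+1}+\frac{\sigma}{k+2}(B_1y^0-B_1y^{k+1})$. Algorithm II (Halpern accelerated pADMM without proximal terms): with $w^0=(y^0,z^0,x^0)$ and for $k\ge0$: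 $\bar z^{k+1}=\arg\min_z L_\sigma(y^k,z;x^k)$; $\bar x^{k+1}=x^k+\sigma(B_1y^k+B_2\bar z^{k+1}-c)$; $\bar y^{k+1}=\arg\min_y L_\sigma(y,\bar z^{k+1};\bar x^{k+1})$; $\hat w^{k+1}=2\bar w^{k+1}-w^k$; $w^{k+1}=\frac{1}{k+2}w^0+\frac{k+1}{k+2}\hat w^{k+1}$, where $w^k=(y^k,z^k,x^k)$ and $\bar w^{k+1}=(\bar y^{k+1},\bar z^{k+1},\bar x^{k+1})$. Then all subproblems in both algorithms have unique solutions, and for every $k\ge0$, $(y^{k+1},z^{k+1},x^{k+1/2})$ (from Algorithm I) equals $(\bar y^{k+1},\bar z^{k+1},\bar x^{k+1})$ (from Algorithm II), both started from the same $(y^0,x^0)$. *)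

(* Defs.v *)
(* real Euclidean spaces are row vectors 'rV[R]_n over R : realType,
   extended-real-valued functions take values in \bar R (constructive_ereal). *)
From HB Require Import structures.
From mathcomp Require Import all_boot all_order all_algebra.
From mathcomp Require Import reals constructive_ereal.

Set Implicit Arguments.
Unset Strict Implicit.
Unset Printing Implicit Defensive.

Import Order.TTheory GRing.Theory Num.Theory.

Local Open Scope ring_scope.

Section Defs.
Variable R : realType.

Definition dotv (n : nat) (u v : 'rV[R]_n) : R := (u *m v^T) 0 0.
Definition sqnorm (n : nat) (u : 'rV[R]_n) : R := dotv u u.

Definition eproper (n : nat) (f : 'rV[R]_n -> \bar R) : Prop :=
  (forall x, f x != -oo%E) /\ exists x, f x \is a fin_num.

(* convex: the epigraph is convex *)
Definition econvex (n : nat) (f : 'rV[R]_n -> \bar R) : Prop :=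
  forall (x y : 'rV[R]_n) (t a b : R), 0 <= t <= 1 ->
    (f x <= a%:E)%E -> (f y <= b%:E)%E ->
    (f (t *: x + (1 - t) *: y)%R <= (t * a + (1 - t) * b)%:E)%E.

(* closed: lower semicontinuous everywhere *)
Definition eclosed (n : nat) (f : 'rV[R]_n -> \bar R) : Prop :=
  forall (x : 'rV[R]_n) (a : R), (a%:E < f x)%E ->
    exists2 e : R, 0 < e & forall y, sqnorm (y - x) < e -> (a%:E < f y)%E.

Definition proper_closed_convex (n : nat) (f : 'rV[R]_n -> \bar R) : Prop :=
  [/\ eproper f, eclosed f & econvex f].

Definition in_dom (n : nat) (f : 'rV[R]_n -> \bar R) (x : 'rV[R]_n) : Prop :=
  (f x < +oo)%E.

Definition subdiff (n : nat) (f : 'rV[R]_n -> \bar R) (x v : 'rV[R]_n) : Prop :=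
  f x \is a fin_num /\ forall y, (f x + (dotv v (y - x))%:E <= f y)%E.

(* A linear map B : R^n -> R^m is a matrix acting on rows: y |-> y *m B;
   its adjoint is x |-> x *m B^T.
   The set-valued operator  \partial f + sigma B^* B  (graph as a relation). *)
Definition subdiff_plus (n m : nat) (f : 'rV[R]_n -> \bar R) (sigma : R)
  (B : 'M[R]_(n, m)) (x u : 'rV[R]_n) : Prop :=
  exists2 v, subdiff f x v & u = v + sigma *: (x *m B *m B^T).

Definition monotone_op (n : nat) (T : 'rV[R]_n -> 'rV[R]_n -> Prop) : Prop :=
  forall x x' u u', T x u -> T x' u' -> 0 <= dotv (u - u') (x - x').

Definition maximal_monotone (n : nat) (T : 'rV[R]_n -> 'rV[R]_n -> Prop) : Prop :=
  monotone_op T /\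
  forall x u, (forall x' u', T x' u' -> 0 <= dotv (u - u') (x - x')) -> T x u.

Definition strongly_monotone (n : nat) (T : 'rV[R]_n -> 'rV[R]_n -> Prop) : Prop :=
  exists2 mu : R, 0 < mu & forall x x' u u', T x u -> T x' u' ->
    mu * sqnorm (x - x') <= dotv (u - u') (x - x').

Definition augL (nx ny nz : nat) (f1 : 'rV[R]_ny -> \bar R) (f2 : 'rV[R]_nz -> \bar R)
  (B1 : 'M[R]_(ny, nx)) (B2 : 'M[R]_(nz, nx)) (c : 'rV[R]_nx) (sigma : R)
  (y : 'rV[R]_ny) (z : 'rV[R]_nz) (x : 'rV[R]_nx) : \bar R :=
  (f1 y + f2 z + (dotv x (y *m B1 + z *m B2 - c)
                 + sigma / 2 * sqnorm (y *m B1 + z *m B2 - c))%:E)%E.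

(* z-subproblem objective: L_sigma(y,.;x) with the z-independent term f1(y)
   dropped (so that it is meaningful even if y \notin dom f1). *)
Definition zsub (nx ny nz : nat) (f2 : 'rV[R]_nz -> \bar R)
  (B1 : 'M[R]_(ny, nx)) (B2 : 'M[R]_(nz, nx)) (c : 'rV[R]_nx) (sigma : R)
  (y : 'rV[R]_ny) (x : 'rV[R]_nx) (z : 'rV[R]_nz) : \bar R :=
  (f2 z + (dotv x (y *m B1 + z *m B2 - c)
           + sigma / 2 * sqnorm (y *m B1 + z *m B2 - c))%:E)%E.

(* y-subproblem objective: L_sigma(.,z;x) with the y-independent term f2(z) dropped. *)
Definition ysub (nx ny nz : nat) (f1 : 'rV[R]_ny -> \bar R)
  (B1 : 'M[R]_(ny, nx)) (B2 : 'M[R]_(nz, nx)) (c : 'rV[R]_nx) (sigma : R)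
  (z : 'rV[R]_nz) (x : 'rV[R]_nx) (y : 'rV[R]_ny) : \bar R :=
  (f1 y + (dotv x (y *m B1 + z *m B2 - c)
           + sigma / 2 * sqnorm (y *m B1 + z *m B2 - c))%:E)%E.

Definition is_argmin (T : Type) (g : T -> \bar R) (t : T) : Prop :=
  forall t', (g t <= g t')%E.

End Defs.

(* Main.v *)
Require Import Defs.
From HB Require Import structures.
From mathcomp Require Import all_boot all_order all_algebra.
From mathcomp Require Import boolp classical_sets reals constructive_ereal.
From mathcomp Require Import ring lra.
Import Order.TTheory GRing.Theory Num.Theory.
Set Implicit Arguments.
Unset Strict Implicit.
Local Open Scope ring_scope.
Section Vec.
Variable R : realType.
Variable n : nat.
Implicit Types u v w : 'rV[R]_n.
Implicit Types t a : R.

Lemma dotvE u v : dotv u v = \sum_i u 0 i * v 0 i.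
Proof. by rewrite /dotv !mxE; apply: eq_bigr => i _; rewrite mxE. Qed.

Lemma dotvC u v : dotv u v = dotv v u.
Proof. by rewrite !dotvE; apply: eq_bigr => i _; rewrite mulrC. Qed.

Lemma dotvDl u v w : dotv (u + v) w = dotv u w + dotv v w.
Proof. by rewrite !dotvE -big_split; apply: eq_bigr => i _; rewrite mxE mulrDl. Qed.

Lemma dotvDr u v w : dotv w (u + v) = dotv w u + dotv w v.
Proof. by rewrite !(dotvC w) dotvDl. Qed.

Lemma dotvZl a u v : dotv (a *: u) v = a * dotv u v.
Proof. by rewrite !dotvE mulr_sumr; apply: eq_bigr => i _; rewrite mxE mulrA. Qed.

Lemma dotvZr a u v : dotv v (a *: u) = a * dotv v u.
Proof. by rewrite !(dotvC v) dotvZl. Qed.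

Lemma dotvNl u v : dotv (- u) v = - dotv u v.
Proof. by rewrite -scaleN1r dotvZl mulN1r. Qed.

Lemma dotvNr u v : dotv v (- u) = - dotv v u.
Proof. by rewrite !(dotvC v) dotvNl. Qed.

Lemma dotvBl u v w : dotv (u - v) w = dotv u w - dotv v w.
Proof. by rewrite dotvDl dotvNl. Qed.

Lemma dotvBr u v w : dotv w (u - v) = dotv w u - dotv w v.
Proof. by rewrite dotvDr dotvNr. Qed.

Lemma dotv0l u : dotv 0 u = 0.
Proof. by rewrite dotvE big1 // => i _; rewrite mxE mul0r. Qed.

Lemma dotv0r u : dotv u 0 = 0.
Proof. by rewrite dotvC dotv0l. Qed.

Lemma sqnorm_ge0 u : 0 <= sqnorm u.
Proof. by rewrite /sqnorm dotvE; apply: sumr_ge0 => i _; exact: sqr_ge0. Qed.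

Lemma sqnorm_eq0 u : sqnorm u = 0 -> u = 0.
Proof.
rewrite /sqnorm dotvE => /eqP; rewrite psumr_eq0; last by move=> i _; exact: sqr_ge0.
move/allP => H; apply/rowP => i; rewrite mxE.
have /H /= : i \in index_enum 'I_n by rewrite mem_index_enum.
by rewrite mulf_eq0 orbb => /eqP.
Qed.

Lemma sqnorm_coord u i : u 0 i ^+ 2 <= sqnorm u.
Proof.
rewrite /sqnorm dotvE (bigD1 i) //= expr2 lerDl.
by apply: sumr_ge0 => j _; exact: sqr_ge0.
Qed.

Lemma sqnormD u v : sqnorm (u + v) = sqnorm u + 2 * dotv u v + sqnorm v.
Proof. rewrite /sqnorm !dotvDl !dotvDr (dotvC v u); ring. Qed.

Lemma sqnormB u v : sqnorm (u - v) = sqnorm u - 2 * dotv u v + sqnorm v.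
Proof. rewrite /sqnorm !dotvBl !dotvBr (dotvC v u); ring. Qed.

Lemma sqnormZ a u : sqnorm (a *: u) = a ^+ 2 * sqnorm u.
Proof. rewrite /sqnorm dotvZl dotvZr; ring. Qed.

Lemma sqnormN u : sqnorm (- u) = sqnorm u.
Proof. by rewrite /sqnorm dotvNl dotvNr opprK. Qed.

Lemma dotv_lb u v t : 0 < t -> - ((t * sqnorm u + sqnorm v / t) / 2) <= dotv u v.
Proof.
move=> t0; have := sqnorm_ge0 (t *: u + v).
rewrite sqnormD sqnormZ dotvZl => H.
have -> : - ((t * sqnorm u + sqnorm v / t) / 2) =
   dotv u v - (t ^+ 2 * sqnorm u + 2 * (t * dotv u v) + sqnorm v) / (2 * t).
  by field; rewrite gt_eqF.
rewrite lerBlDr lerDl; apply: divr_ge0 => //; apply: mulr_ge0 => //; exact: ltW.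
Qed.

Lemma dotv_ub u v t : 0 < t -> dotv u v <= (t * sqnorm u + sqnorm v / t) / 2.
Proof.
move=> t0; have := dotv_lb (- u) v t0; rewrite sqnormN dotvNl.
by rewrite lerN2.
Qed.

Lemma sqnormD_le u v : sqnorm (u + v) <= 2 * sqnorm u + 2 * sqnorm v.
Proof.
rewrite sqnormD; have := dotv_ub u v (@ltr01 R).
rewrite !mul1r divr1 => H; lra.
Qed.

End Vec.

Lemma dotv_mulmx (R : realType) (n m : nat) (u : 'rV[R]_n) (M : 'M[R]_(n, m)) v :
  dotv (u *m M) v = dotv u (v *m M^T).
Proof. by rewrite /dotv trmx_mul trmxK mulmxA. Qed.
Section Complete.
Variable R : realType.

Lemma sq_lt_lin (x e : R) : 0 < e -> x ^+ 2 < e ^+ 2 -> - e < x /\ x < e.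
Proof. by move=> e0 h; split; nra. Qed.

Lemma real_complete (r : nat -> R) :
  (forall e : R, 0 < e -> exists N, forall m k, (N <= m)%N -> (N <= k)%N ->
      (r m - r k) ^+ 2 < e) ->
  exists L, forall e : R, 0 < e -> exists N, forall m, (N <= m)%N -> (r m - L) ^+ 2 < e.
Proof.
move=> Hc.
have Hl : forall e : R, 0 < e -> exists N, forall m k, (N <= m)%N -> (N <= k)%N ->
    r m - r k < e.
  move=> e e0; have [N HN] := Hc (e ^+ 2) (exprn_gt0 2 e0).
  by exists N => m k Hm Hk; have [] := sq_lt_lin e0 (HN m k Hm Hk).
pose E : set R := fun x => exists N, forall m, (N <= m)%N -> x <= r m.
have [N1 HN1] := Hl 1 ltr01.
have E0 : E (r N1 - 1).
  exists N1 => m Hm; have := HN1 N1 m (leqnn _) Hm; lra.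
have ubE : forall N e, (forall m k, (N <= m)%N -> (N <= k)%N -> r m - r k < e) ->
    ubound E (r N + e).
  move=> N e HN x [N' HN']; have := HN' (maxn N N') (leq_maxr _ _).
  have := HN (maxn N N') N (leq_maxl _ _) (leqnn _); lra.
have hsE : has_ubound E by exists (r N1 + 1); exact: ubE.
exists (sup E) => e e0.
have e20 : 0 < Num.sqrt e / 2 by rewrite divr_gt0 // sqrtr_gt0.
have [N HN] := Hl _ e20.
exists N => m Hm.
have h1 : r N - Num.sqrt e / 2 <= sup E.
  apply: ub_le_sup => //; exists N => k Hk; have := HN N k (leqnn _) Hk; lra.
have h2 : sup E <= r N + Num.sqrt e / 2.
  by apply: ge_sup; [exists (r N1 - 1) | exact: ubE].
have h3 := HN m N Hm (leqnn _); have h4 := HN N m (leqnn _) Hm.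
have se := sqr_sqrtr (ltW e0).
have sq0 : 0 <= Num.sqrt e by exact: sqrtr_ge0.
nra.
Qed.

Variable n : nat.

Lemma vec_complete (s : nat -> 'rV[R]_n) :
  (forall e : R, 0 < e -> exists N, forall m k, (N <= m)%N -> (N <= k)%N ->
      sqnorm (s m - s k) < e) ->
  exists l, forall e : R, 0 < e -> exists N, forall m, (N <= m)%N -> sqnorm (s m - l) < e.
Proof.
move=> Hc.
have Hi : forall i : 'I_n, exists L, forall e : R, 0 < e -> exists N, forall m, (N <= m)%N ->
    (s m 0 i - L) ^+ 2 < e.
  move=> i; apply: real_complete => e e0; have [N HN] := Hc e e0.
  exists N => m k Hm Hk; apply: le_lt_trans (HN m k Hm Hk).
  by have := sqnorm_coord (s m - s k) i; rewrite !mxE.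
pose L i := proj1_sig (cid (Hi i)).
have HL i := proj2_sig (cid (Hi i)).
exists (\row_i L i) => e e0.
pose eta := Num.min 1 (e / n.+1%:R).
have eta0 : 0 < eta by rewrite lt_min ltr01 divr_gt0.
have etae : eta ^+ 2 <= e / n.+1%:R.
  have h1 : eta <= 1 by rewrite ge_min lexx.
  have h2 : eta <= e / n.+1%:R by rewrite ge_min lexx orbT.
  move: h1 h2 eta0; clearbody eta; set a := e / _ => h1 h2 h0; nra.
have HN i := cid (HL i (eta ^+ 2) (exprn_gt0 2 eta0)).
exists (\max_i proj1_sig (HN i)) => m Hm.
rewrite /sqnorm dotvE.
apply: (@le_lt_trans _ _ (\sum_(i < n) e / n.+1%:R)).
  apply: ler_sum => i _; rewrite !mxE -expr2.
  apply/ltW/(lt_le_trans _ etae)/(proj2_sig (HN i)).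
  exact: leq_trans (leq_bigmax i) Hm.
rewrite sumr_const card_ord -[_ *+ n]mulr_natr.
have hn : (n%:R : R) < n.+1%:R by rewrite ltr_nat.
have hn0 : (0 : R) <= n%:R by rewrite ler0n.
rewrite mulrAC ltr_pdivrMr ?ltr0n //; nra.
Qed.

End Complete.
Lemma small_t (R : realType) (a q : R) : 0 <= q ->
  (forall t : R, 0 < t -> t <= 1 -> 0 <= t * a + t ^+ 2 * q) -> 0 <= a.
Proof.
move=> q0 H; rewrite leNgt; apply/negP => a0.
pose t := Num.min 1 (- a / (q + 1)).
have t0 : 0 < t by rewrite lt_min ltr01 divr_gt0 // ?oppr_gt0 //; lra.
have t1 : t <= 1 by rewrite ge_min lexx.
have t2 : t <= - a / (q + 1) by rewrite ge_min lexx orbT.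
have := H t t0 t1.
have t3 : t * (q + 1) <= - a by rewrite -ler_pdivlMr //; lra.
move: t0 t1 t3; clearbody t => t0 t1 t3; nra.
Qed.

Lemma ereal_fin_le (R : realType) (x : \bar R) (a : R) :
  x != -oo%E -> (x <= a%:E)%E -> exists r, x = r%:E /\ r <= a.
Proof.
case: x => [r _ h| _ h |] //; by exists r; split; rewrite // -lee_fin.
Qed.

Lemma ereal_fin (R : realType) (x : \bar R) : x \is a fin_num -> exists r, x = r%:E.
Proof. by move=> h; exists (fine x); rewrite fineK. Qed.

Section Core.
Variables (R : realType) (n k : nat) (f : 'rV[R]_n -> \bar R) (sigma : R)
  (B : 'M[R]_(n, k)).
Hypotheses (s0 : 0 < sigma) (hf : proper_closed_convex f)
  (hmax : maximal_monotone (subdiff_plus f sigma B))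
  (hsm : strongly_monotone (subdiff_plus f sigma B)).

Definition Phi (p : 'rV[R]_n) (lam : R) (w z : 'rV[R]_n) : R :=
  sigma / 2 * sqnorm (z *m B) + dotv z p + lam / 2 * sqnorm (z - w).

Lemma Phi_exp p lam w z d : Phi p lam w (z + d) = Phi p lam w z +
  dotv (p + sigma *: (z *m B *m B^T) + lam *: (z - w)) d +
  (sigma / 2 * sqnorm (d *m B) + lam / 2 * sqnorm d).
Proof.
rewrite /Phi mulmxDl (_ : z + d - w = (z - w) + d); last by rewrite addrAC.
rewrite (sqnormD (z *m B)) (sqnormD (z - w)) (dotvDl z d p).
rewrite (dotvDl (p + _) _ d) (dotvDl p _ d) !dotvZl.
rewrite (dotvC (z *m B)) dotv_mulmx (dotvC (z *m B *m B^T)) (dotvC d p).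
by field => //.
Qed.

Lemma Phi_Q lam t d : sigma / 2 * sqnorm ((t *: d) *m B) + lam / 2 * sqnorm (t *: d) =
  t ^+ 2 * (sigma / 2 * sqnorm (d *m B) + lam / 2 * sqnorm d).
Proof. by rewrite -scalemxAl !sqnormZ; field => //. Qed.

Lemma fnotmo z : f z != -oo%E.
Proof. by have [[H _] _ _] := hf. Qed.

Lemma min_graph p lam w zs : 0 <= lam -> f zs \is a fin_num ->
  (forall z, (f zs + (Phi p lam w zs)%:E <= f z + (Phi p lam w z)%:E)%E) ->
  subdiff_plus f sigma B zs (- p - lam *: (zs - w)).
Proof.
move=> l0 fzs Hmin.
have [_ _ hconv] := hf.
apply: hmax.2 => z' u' Tz'.
have [Fs hFs] := ereal_fin fzs.
case: Tz' => v [fz' hsub] ->.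
have [F' hF'] := ereal_fin fz'.
have hsg := hsub zs; rewrite hFs hF' -EFinD lee_fin in hsg.
set d := z' - zs.
set g := p + sigma *: (zs *m B *m B^T) + lam *: (zs - w).
set Q := sigma / 2 * sqnorm (d *m B) + lam / 2 * sqnorm d.
have Q0 : 0 <= Q.
  by rewrite /Q addr_ge0 // mulr_ge0 // ?divr_ge0 ?sqnorm_ge0 // ltW.
have key : 0 <= dotv (v + g) d.
  apply: (small_t Q0) => t t0 t1.
  have ht : 0 <= t <= 1 by rewrite (ltW t0) t1.
  have h1 : (f z' <= F'%:E)%E by rewrite hF'.
  have h2 : (f zs <= Fs%:E)%E by rewrite hFs.
  have hc := hconv z' zs t F' Fs ht h1 h2.
  have ezt : t *: z' + (1 - t) *: zs = zs + t *: d.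
    by rewrite /d; apply/rowP => i; rewrite !mxE; ring.
  rewrite ezt in hc.
  have [r [hr hrle]] := ereal_fin_le (fnotmo _) hc.
  have hm := Hmin (zs + t *: d).
  rewrite Phi_exp hr hFs -!EFinD lee_fin dotvZr Phi_Q -/Q in hm.
  have e1 : dotv v (zs - z') = - dotv v d by rewrite /d -opprB dotvNr.
  rewrite e1 in hsg; rewrite dotvDl; nra.
have e2 : - p - lam *: (zs - w) - (v + sigma *: (z' *m B *m B^T)) =
    - (v + g) - sigma *: (d *m B *m B^T).
  rewrite /g /d !mulmxBl.
  move: (z' *m B *m B^T) (zs *m B *m B^T) => P1 P2.
  by apply/rowP => i; rewrite !mxE; ring.
rewrite e2 (_ : zs - z' = - d); last by rewrite /d opprB.
rewrite dotvBl dotvNl dotvZl !dotvNr (dotvC (d *m B *m B^T)) -dotv_mulmx.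
have := sqnorm_ge0 (d *m B); rewrite /sqnorm => h.
rewrite opprK mulrN opprK; apply: addr_ge0 => //; apply: mulr_ge0 => //; exact: ltW.
Qed.


Lemma graph_lb z' u' : subdiff_plus f sigma B z' u' ->
  exists F', f z' = F'%:E /\
  forall z, ((F' + dotv (u' - sigma *: (z' *m B *m B^T)) (z - z'))%:E <= f z)%E.
Proof.
case=> v [fz' hsub] ->; have [F' hF'] := ereal_fin fz'.
exists F'; split => // z; rewrite addrK EFinD -hF'; exact: hsub.
Qed.

Lemma graph_min p zs : subdiff_plus f sigma B zs (- p) ->
  forall z, (f zs + (Phi p 0 0 zs)%:E <= f z + (Phi p 0 0 z)%:E)%E.
Proof.
move=> Tzs z; have [Fs [hFs hsub]] := graph_lb Tzs.
have := hsub z; set d := z - zs => hz.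
have ez : z = zs + d by rewrite /d addrC subrK.
have Q0 : 0 <= sigma / 2 * sqnorm (d *m B) + 0 / 2 * sqnorm d.
  by rewrite mul0r mul0r addr0 mulr_ge0 // ?divr_ge0 ?sqnorm_ge0 // ltW.
move: hz; rewrite [in Phi p 0 0 z]ez Phi_exp hFs.
case: (f z) => [r | | ] hz //=.
rewrite -!EFinD lee_fin; rewrite lee_fin in hz.
  rewrite scale0r addr0 !dotvDl dotvZl !mul0r addr0 in Q0 *.
  rewrite dotvBl dotvZl dotvNl in hz.
  lra.
by rewrite addye ?leey.
Qed.

Lemma fin_exists : exists z0, f z0 \is a fin_num.
Proof. by have [[_ H] _ _] := hf. Qed.

Lemma argmin_fin (G : 'rV[R]_n -> R) zs :
  (forall z, (f zs + (G zs)%:E <= f z + (G z)%:E)%E) -> f zs \is a fin_num.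
Proof.
move=> H; have [z0 hz0] := fin_exists; have [r0 hr0] := ereal_fin hz0.
have := H z0; rewrite hr0 -EFinD.
have := fnotmo zs; case: (f zs) => //.
Qed.

Lemma argmin_unique p z1 z2 :
  (forall z, (f z1 + (Phi p 0 0 z1)%:E <= f z + (Phi p 0 0 z)%:E)%E) ->
  (forall z, (f z2 + (Phi p 0 0 z2)%:E <= f z + (Phi p 0 0 z)%:E)%E) ->
  z1 = z2.
Proof.
move=> H1 H2.
have T1 := min_graph (lexx 0) (argmin_fin H1) H1.
have T2 := min_graph (lexx 0) (argmin_fin H2) H2.
rewrite scale0r subr0 in T1; rewrite scale0r subr0 in T2.
have [mu mu0 Hmu] := hsm; have := Hmu _ _ _ _ T1 T2.
rewrite subrr dotv0l => h.
have h0 : sqnorm (z1 - z2) = 0.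
  by apply/eqP; rewrite eq_le sqnorm_ge0 andbT -(pmulr_rle0 _ mu0).
by apply/eqP; rewrite -subr_eq0; apply/eqP; exact: sqnorm_eq0.
Qed.


Lemma graph_nonempty : exists z1 u1, subdiff_plus f sigma B z1 u1.
Proof.
apply: contrapT => H; apply H; exists 0, 0; apply: hmax.2 => z' u' T'.
by exfalso; apply H; exists z', u'.
Qed.

Lemma arch (e : R) : 0 < e -> exists K, forall N, (K <= N)%N -> N.+1%:R^-1 < e.
Proof.
move=> e0; have [K hK] := ltr_add_invr e0; rewrite add0r in hK.
exists K => N hN; apply: le_lt_trans hK.
by rewrite lef_pV2 ?posrE ?ltr0n // ler_nat.
Qed.

Lemma fin_val z : f z \is a fin_num -> f z = (fine (f z))%:E.
Proof. by move=> h; rewrite fineK. Qed.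

Lemma exists_min p lam w : 0 < lam -> exists zs, f zs \is a fin_num /\
   forall z, (f zs + (Phi p lam w zs)%:E <= f z + (Phi p lam w z)%:E)%E.
Proof.
move=> l0.
have [_ hclosed hconv] := hf.
pose G := Phi p lam w.
have [z1 [u1 T1]] := graph_nonempty.
have [F1 [hF1 hlb]] := graph_lb T1.
move: hlb; set v1 := u1 - sigma *: (z1 *m B *m B^T) => hlb.
pose a := p + v1.
pose K := F1 - dotv v1 z1 + dotv w a - (sqnorm a / lam) / 2.
have Glb : forall z r, f z = r%:E -> K <= r + G z.
  move=> z r hr; have := hlb z; rewrite hr lee_fin => h.
  have q1 : 0 <= sigma / 2 * sqnorm (z *m B).
    by rewrite mulr_ge0 // ?divr_ge0 ?sqnorm_ge0 // ltW.
  have q2 := dotv_lb (z - w) a l0.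
  have e1 : dotv v1 (z - z1) = dotv z v1 - dotv v1 z1 by rewrite dotvBr dotvC.
  have e2 : dotv z a = dotv z p + dotv z v1 by rewrite dotvDr.
  have e3 : dotv (z - w) a = dotv z a - dotv w a by rewrite dotvBl.
  rewrite /G /Phi /K; rewrite e1 in h; rewrite e3 e2 in q2.
  lra.
pose val z := fine (f z) + G z.
pose S : set R := fun r => exists z, f z \is a fin_num /\ r = val z.
have Sne : S (val z1) by exists z1; split => //; rewrite hF1.
have Slb : has_lbound S.
  exists K => r [z [hz ->]]; apply: Glb; exact: fin_val.
pose m := inf S.
have minS : forall z, f z \is a fin_num -> m <= val z.
  by move=> z hz; apply: ge_inf => //; exists z.
have hseq : forall N, exists z, f z \is a fin_num /\ val z < m + N.+1%:R^-1.
  move=> N; have hN : (0:R) < N.+1%:R^-1 by rewrite invr_gt0 ltr0Sn.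
  have [r [z [hz ->]] hr] := @inf_adherent _ S _ hN (conj (ex_intro _ _ Sne) Slb).
  by exists z.
pose zs N := proj1_sig (cid (hseq N)).
have hzs N : f (zs N) \is a fin_num /\ val (zs N) < m + N.+1%:R^-1.
  exact: (proj2_sig (cid (hseq N))).
have mid : forall x y, f x \is a fin_num -> f y \is a fin_num ->
    lam / 8 * sqnorm (x - y) <= (val x + val y) / 2 - m.
  move=> x y hx hy.
  have ht : 0 <= (2^-1 : R) <= 1.
    by rewrite invr_ge0 ler0n /= invf_le1 ?ler1n // ltr0n.
  have [fx hfx] := ereal_fin hx; have [fy hfy] := ereal_fin hy.
  have h1 : (f x <= fx%:E)%E by rewrite hfx.
  have h2 : (f y <= fy%:E)%E by rewrite hfy.
  have hc := hconv x y 2^-1 fx fy ht h1 h2.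
  move: hc; set md := 2^-1 *: x + (1 - 2^-1) *: y => hc.
  have [r [hr hrle]] := ereal_fin_le (fnotmo _) hc.
  have hm := minS md; rewrite /val hr /= in hm; have {}hm := hm isT.
  pose h : 'rV[R]_n := 2^-1 *: (x - y).
  have ex : x = md + h by rewrite /md /h; apply/rowP => i; rewrite !mxE; field.
  have ey : y = md + - h by rewrite /md /h; apply/rowP => i; rewrite !mxE; field.
  set g := p + sigma *: (md *m B *m B^T) + lam *: (md - w).
  have gx : G x = G md + dotv g h + (sigma / 2 * sqnorm (h *m B) + lam / 2 * sqnorm h).
    by rewrite {1}ex /G Phi_exp.
  have gy : G y = G md - dotv g h + (sigma / 2 * sqnorm (h *m B) + lam / 2 * sqnorm h).
    by rewrite {1}ey /G Phi_exp mulNmx !sqnormN dotvNr.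
  have sh : sqnorm h = 4^-1 * sqnorm (x - y).
    by rewrite /h sqnormZ; congr (_ * _); field.
  have q1 : 0 <= sigma / 2 * sqnorm (h *m B).
    by rewrite mulr_ge0 // ?divr_ge0 ?sqnorm_ge0 // ltW.
  rewrite /val hfx hfy /=.
  rewrite sh in gx gy.
  have e8 : lam / 8 * sqnorm (x - y) = lam / 2 * (4^-1 * sqnorm (x - y)) by field.
  rewrite e8.
  lra.
have Hc : forall e : R, 0 < e -> exists N, forall i j, (N <= i)%N -> (N <= j)%N ->
    sqnorm (zs i - zs j) < e.
  move=> e e0; have [N HN] := arch (mulr_gt0 e0 (divr_gt0 l0 (ltr0n R 8))) .
  exists N => i j hi hj.
  have [hi1 hi2] := hzs i; have [hj1 hj2] := hzs j.
  have := mid _ _ hi1 hj1.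
  have bi : i.+1%:R^-1 <= N.+1%:R^-1 :> R by rewrite lef_pV2 ?posrE ?ltr0n // ler_nat.
  have bj : j.+1%:R^-1 <= N.+1%:R^-1 :> R by rewrite lef_pV2 ?posrE ?ltr0n // ler_nat.
  have bN := HN N (leqnn _).
  have := sqnorm_ge0 (zs i - zs j).
  move: bN; set q := sqnorm _ => bN q0 hq.
  have e8 : e * (lam / 8%:R) = lam / 8 * e by rewrite mulrC.
  rewrite e8 in bN.
  have : lam / 8 * q < lam / 8 * e.
    have bN' : N.+1%:R^-1 < lam / 8 * e :> R := bN.
    move: bi bj hi2 hj2 bN' hq; generalize (i.+1%:R^-1 : R) (j.+1%:R^-1 : R) (N.+1%:R^-1 : R).
    move=> ci cj cN; generalize (lam / 8 * q) (lam / 8 * e) (val (zs i)) (val (zs j)).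
    move=> A E vi vj; lra.
  by rewrite ltr_pM2l // divr_gt0.
have [l Hl] := vec_complete Hc.
have Hle : (f l + (G l)%:E <= m%:E)%E.
  rewrite leNgt; apply/negP => hlt.
  have [d [d0 hd]] : exists d, 0 < d /\ ((m + 3 * d - G l)%:E < f l)%E.
    move: hlt; case: (f l) => [r | | ] //= hlt.
      exists ((r + G l - m) / 4); rewrite -EFinD lte_fin in hlt; split; first lra.
      rewrite lte_fin; lra.
    by exists 1; split => //; exact: ltry.
  have [e1 e10 He1] := hclosed l _ hd.
  set gl := p + sigma *: (l *m B *m B^T) + lam *: (l - w).
  have g0 : 0 < sqnorm gl + 1 by have := sqnorm_ge0 gl; lra.
  pose t := d / (sqnorm gl + 1).
  have t0 : 0 < t by rewrite divr_gt0.
  have tg : t * sqnorm gl <= d.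
    rewrite /t mulrAC ler_pdivrMr //; have := sqnorm_ge0 gl; nra.
  have HG : forall y, sqnorm (y - l) < t * d -> G l - d < G y.
    move=> y hy; have ey : y = l + (y - l) by rewrite addrC subrK.
    rewrite ey /G Phi_exp -/gl.
    have := dotv_lb gl (y - l) t0.
    have q1 : 0 <= sigma / 2 * sqnorm ((y - l) *m B).
      by rewrite mulr_ge0 // ?divr_ge0 ?sqnorm_ge0 // ltW.
    have q2 : 0 <= lam / 2 * sqnorm (y - l).
      by rewrite mulr_ge0 // ?divr_ge0 ?sqnorm_ge0 // ltW.
    have q3 : sqnorm (y - l) / t < d by rewrite ltr_pdivrMr // mulrC.
    rewrite /G; lra.
  have mn0 : 0 < Num.min e1 (t * d) by rewrite lt_min e10 mulr_gt0.
  have [N1 HN1] := Hl _ mn0.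
  have [N2 HN2] := arch d0.
  pose N := maxn N1 N2.
  have := HN1 N (leq_maxl _ _); rewrite lt_min => /andP[c1 c2].
  have c3 := HN2 N (leq_maxr _ _).
  have [c4 c5] := hzs N.
  have c6 := He1 _ c1; rewrite (fin_val c4) lte_fin in c6.
  have c7 := HG _ c2.
  have c3' : N.+1%:R^-1 < d :> R := c3.
  have c5' : fine (f (zs N)) + G (zs N) < m + N.+1%:R^-1 :> R := c5.
  move: c3' c5'; generalize (N.+1%:R^-1 : R) => cN; lra.
have hfl : f l \is a fin_num.
  move: Hle; have := fnotmo l; case: (f l) => //.
exists l; split => // z.
have [fl hfl'] := ereal_fin hfl.
move: Hle; rewrite hfl' -EFinD lee_fin => Hle.
have := fnotmo z; case Ez: (f z) => [r | | ] // _.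
  have := minS z; rewrite /val Ez /= -EFinD lee_fin => H.
  have {}H := H isT; rewrite /G in Hle H *; lra.
by rewrite addye ?leey.
Qed.

Lemma sm_bound (mu : R) (c d : 'rV[R]_n) : 0 < mu -> mu * sqnorm d <= dotv c d ->
  sqnorm d <= sqnorm c / mu ^+ 2.
Proof.
move=> mu0 h; have mi0 : 0 < mu^-1 by rewrite invr_gt0.
have := dotv_ub c d mi0; rewrite invrK => h2.
have h3 : mu * sqnorm d <= mu^-1 * sqnorm c by lra.
rewrite ler_pdivlMr ?exprn_gt0 //.
have : mu * (mu * sqnorm d) <= mu * (mu^-1 * sqnorm c) by rewrite ler_pM2l.
by rewrite mulVKf ?gt_eqF // mulrA -expr2 mulrC.
Qed.

Lemma approx0 (x : R) : (forall e : R, 0 < e -> - e <= x) -> 0 <= x.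
Proof.
move=> H; rewrite leNgt; apply/negP => x0.
have hx : 0 < - x / 2 by rewrite divr_gt0 // oppr_gt0.
have := H _ hx; lra.
Qed.

Lemma exists_graph p : exists zs, subdiff_plus f sigma B zs (- p).
Proof.
have [mu mu0 Hmu] := hsm.
have [z1 [u1 T1]] := graph_nonempty.
have lam0 : forall N : nat, 0 < N.+1%:R^-1 :> R by move=> N; rewrite invr_gt0 ltr0Sn.
have hJ : forall N, exists z,
    subdiff_plus f sigma B z (- p - N.+1%:R^-1 *: (z - z1)).
  move=> N; have [z [hz hmin]] := exists_min p z1 (lam0 N).
  by exists z; apply: min_graph (ltW (lam0 N)) hz hmin.
pose zs N := proj1_sig (cid (hJ N)).
have hT N : subdiff_plus f sigma B (zs N) (- p - N.+1%:R^-1 *: (zs N - z1)).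
  exact: (proj2_sig (cid (hJ N))).
have lam1 : forall N : nat, N.+1%:R^-1 <= 1 :> R.
  by move=> N; rewrite invf_le1 ?ltr0Sn // ler1n.
pose a := p + u1.
pose D := sqnorm a / mu ^+ 2.
have D0 : 0 <= D by rewrite divr_ge0 ?sqnorm_ge0 // exprn_ge0 // ltW.
have hD : forall N, sqnorm (zs N - z1) <= D.
  move=> N; rewrite /D -(sqnormN a); apply: (sm_bound mu0).
  have := Hmu _ _ _ _ (hT N) T1.
  have -> : - p - N.+1%:R^-1 *: (zs N - z1) - u1 = - a - N.+1%:R^-1 *: (zs N - z1).
    by rewrite /a opprD addrAC.
  rewrite dotvBl dotvZl.
  have := sqnorm_ge0 (zs N - z1); have := lam0 N; rewrite /sqnorm.
  generalize (N.+1%:R^-1 : R) => lN; nra.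
have Hc : forall e : R, 0 < e -> exists N, forall i j, (N <= i)%N -> (N <= j)%N ->
    sqnorm (zs i - zs j) < e.
  move=> e e0.
  have g0 : 0 < e * mu ^+ 2 / (4 * D + 1).
    by rewrite divr_gt0 ?mulr_gt0 ?exprn_gt0 //; lra.
  have [N HN] := arch g0.
  exists N => i j hi hj.
  have hc := Hmu _ _ _ _ (hT i) (hT j).
  set li := i.+1%:R^-1 in hc; set lj := j.+1%:R^-1 in hc.
  have ee : - p - li *: (zs i - z1) - (- p - lj *: (zs j - z1)) =
      lj *: (zs j - z1) - li *: (zs i - z1).
    move: (li *: (zs i - z1)) (lj *: (zs j - z1)) => A1 A2.
    by apply/rowP => kk; rewrite !mxE; ring.
  rewrite ee in hc.
  have hb := sm_bound mu0 hc.
  have hs := sqnormD_le (lj *: (zs j - z1)) (- (li *: (zs i - z1))).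
  rewrite sqnormN !sqnormZ in hs.
  have bi : li <= N.+1%:R^-1 by rewrite lef_pV2 ?posrE ?ltr0n // ler_nat.
  have bj : lj <= N.+1%:R^-1 by rewrite lef_pV2 ?posrE ?ltr0n // ler_nat.
  have hN := HN N (leqnn _).
  have li0 : 0 < li by exact: lam0.
  have lj0 : 0 < lj by exact: lam0.
  have li1 : li <= 1 by exact: lam1.
  have lj1 : lj <= 1 by exact: lam1.
  have hDi := hD i; have hDj := hD j.
  have m2 : 0 < mu ^+ 2 by rewrite exprn_gt0.
  have ai : li ^+ 2 * sqnorm (zs i - z1) <= N.+1%:R^-1 * D.
    apply: ler_pM; rewrite ?sqr_ge0 ?sqnorm_ge0 //.
    by rewrite expr2; apply: le_trans bi; rewrite ger_pMr.
  have aj : lj ^+ 2 * sqnorm (zs j - z1) <= N.+1%:R^-1 * D.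
    apply: ler_pM; rewrite ?sqr_ge0 ?sqnorm_ge0 //.
    by rewrite expr2; apply: le_trans bj; rewrite ger_pMr.
  have hN' : N.+1%:R^-1 < e * mu ^+ 2 / (4 * D + 1) :> R := hN.
  have cN0 := lam0 N.
  move: hb hs hN' ai aj m2 D0 cN0; clear hN.
  generalize (N.+1%:R^-1 : R) => cN.
  move: (sqnorm (zs i - zs j)) (sqnorm (zs i - z1)) (sqnorm (zs j - z1)) => X Yi Yj.
  move: (sqnorm (lj *: (zs j - z1) - li *: (zs i - z1))) => C.
  move: (li ^+ 2 * Yi) (lj ^+ 2 * Yj) => Pi Pj.
  move=> hb hs hN ai aj m2 D0 cN0.
  have h1 : C <= 4 * cN * D by lra.
  have h2 : X * mu ^+ 2 <= C by rewrite -ler_pdivlMr.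
  have h3 : cN * (4 * D + 1) < e * mu ^+ 2 by rewrite -ltr_pdivlMr //; lra.
  have : X * mu ^+ 2 < e * mu ^+ 2 by lra.
  by rewrite ltr_pM2r.
have [l Hl] := vec_complete Hc.
exists l; apply: hmax.2 => z' u' T'.
apply: approx0 => e e0.
set c := - p - u'.
pose E := sqnorm (z1 - z').
have E0 : 0 <= E by exact: sqnorm_ge0.
have c0 : 0 < 2 * (sqnorm c + 1) by have := sqnorm_ge0 c; lra.
pose t := e / (2 * (sqnorm c + 1)).
have t0 : 0 < t by rewrite divr_gt0.
have tc : t * sqnorm c <= e / 2.
  rewrite /t mulrAC ler_pdivrMr //.
  have -> : e / 2 * (2 * (sqnorm c + 1)) = e * sqnorm c + e by field => //.
  lra.
have te0 : 0 < t * e / 2 by rewrite divr_gt0 // mulr_gt0.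
have [N1 HN1] := Hl _ te0.
have g0 : 0 < e / (3 * D + 2 * E + 1) by rewrite divr_gt0 //; lra.
have [N2 HN2] := arch g0.
pose N := maxn N1 N2.
have h1 := HN1 N (leq_maxl _ _).
have h2 := HN2 N (leq_maxr _ _).
have hm := hmax.1 _ _ _ _ (hT N) T'.
set lN := N.+1%:R^-1 in hm h2.
have ec : - p - lN *: (zs N - z1) - u' = c - lN *: (zs N - z1).
  rewrite /c; move: (lN *: (zs N - z1)) => A.
  by apply/rowP => kk; rewrite !mxE; ring.
rewrite ec dotvBl dotvZl in hm.
have hlb1 := dotv_lb (zs N - z1) (zs N - z') (@ltr01 R).
have ez : zs N - z' = (zs N - z1) + (z1 - z').
  by apply/rowP => kk; rewrite !mxE; ring.
have hsd := sqnormD_le (zs N - z1) (z1 - z'); rewrite -ez in hsd.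
have hlb2 := dotv_lb c (l - zs N) t0.
have el : sqnorm (l - zs N) = sqnorm (zs N - l) by rewrite -opprB sqnormN.
rewrite el in hlb2.
have hq : sqnorm (zs N - l) / t < e / 2.
  by rewrite ltr_pdivrMr // mulrC mulrA.
have ed : l - z' = (zs N - z') + (l - zs N).
  by apply/rowP => kk; rewrite !mxE; ring.
rewrite ed dotvDr.
have hDN := hD N.
have lN0 : 0 < lN by exact: lam0.
have g1 : lN * (3 * D + 2 * E + 1) < e by rewrite -ltr_pdivlMr //; lra.
move: hm hlb1 hsd hlb2 hq hDN g1 tc; rewrite /E.
move: (dotv (zs N - z1) (zs N - z')) (dotv c (zs N - z')) (dotv c (l - zs N)) => P1 P2 P3.
move: (sqnorm (zs N - z1)) (sqnorm (zs N - z')) (sqnorm (z1 - z')) (sqnorm (zs N - l)) => S1 S2 S3 S4.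
move=> hm hlb1 hsd hlb2 hq hDN g1 tc.
rewrite mul1r divr1 in hlb1.
have k1 : - ((3 * D + 2 * S3) / 2) <= P1 by lra.
have k2 : - (lN * ((3 * D + 2 * S3) / 2)) <= lN * P1.
  by rewrite -mulrN ler_pM2l.
have k3 : lN * (3 * D + 2 * S3) <= e by lra.
lra.
Qed.

Definition Fe (x e : 'rV[R]_k) (z : 'rV[R]_n) : \bar R :=
  (f z + (dotv x (z *m B + e) + sigma / 2 * sqnorm (z *m B + e))%:E)%E.

Lemma Fe_Phi x e z : Fe x e z =
  (f z + (Phi ((x + sigma *: e) *m B^T) 0 0 z)%:E + (dotv x e + sigma / 2 * sqnorm e)%:E)%E.
Proof.
rewrite /Fe -addeA -EFinD; congr (_ + _%:E).
rewrite /Phi -dotv_mulmx (sqnormD (z *m B) e) dotvDr dotvDr dotvZr (dotvC (z *m B) x).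
by field => //.
Qed.

Lemma is_argmin_Fe x e z : is_argmin (Fe x e) z <->
  forall z', (f z + (Phi ((x + sigma *: e) *m B^T) 0 0 z)%:E <=
              f z' + (Phi ((x + sigma *: e) *m B^T) 0 0 z')%:E)%E.
Proof.
rewrite /is_argmin; split => H z'; have := H z'; rewrite !Fe_Phi.
  by rewrite leeD2rE.
by move=> h; rewrite leeD2rE.
Qed.

Lemma Fe_unique_exists x e : exists! z, is_argmin (Fe x e) z.
Proof.
have [zs Tzs] := exists_graph ((x + sigma *: e) *m B^T).
exists zs; split; first by apply/is_argmin_Fe; exact: graph_min.
move=> z' /is_argmin_Fe H'; exact: argmin_unique (graph_min Tzs) H'.
Qed.

Lemma Fe_same x e x' e' z1 z2 : x + sigma *: e = x' + sigma *: e' ->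
  is_argmin (Fe x e) z1 -> is_argmin (Fe x' e') z2 -> z1 = z2.
Proof.
move=> E /is_argmin_Fe H1 /is_argmin_Fe H2; rewrite E in H1.
exact: argmin_unique H1 H2.
Qed.

End Core.

Lemma zsub_Fe (R : realType) (nx ny nz : nat) (f2 : 'rV[R]_nz -> \bar R)
  (B1 : 'M[R]_(ny, nx)) (B2 : 'M[R]_(nz, nx)) (c : 'rV[R]_nx) (sigma : R) y x :
  zsub f2 B1 B2 c sigma y x = Fe f2 sigma B2 x (y *m B1 - c).
Proof.
apply: boolp.funext => z; rewrite /zsub /Fe.
have -> : y *m B1 + z *m B2 - c = z *m B2 + (y *m B1 - c).
  by move: (y *m B1) (z *m B2) => A1 A2; apply/rowP => i; rewrite !mxE; ring.
by [].
Qed.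

Lemma ysub_Fe (R : realType) (nx ny nz : nat) (f1 : 'rV[R]_ny -> \bar R)
  (B1 : 'M[R]_(ny, nx)) (B2 : 'M[R]_(nz, nx)) (c : 'rV[R]_nx) (sigma : R) z x :
  ysub f1 B1 B2 c sigma z x = Fe f1 sigma B1 x (z *m B2 - c).
Proof.
apply: boolp.funext => y; rewrite /ysub /Fe.
have -> : y *m B1 + z *m B2 - c = y *m B1 + (z *m B2 - c).
  by move: (y *m B1) (z *m B2) => A1 A2; apply/rowP => i; rewrite !mxE; ring.
by [].
Qed.

Unset Implicit Arguments.
Set Strict Implicit.

Theorem propositionA1 (R : realType) (nx ny nz : nat)
  (f1 : 'rV[R]_ny -> \bar R) (f2 : 'rV[R]_nz -> \bar R)
  (B1 : 'M[R]_(ny, nx)) (B2 : 'M[R]_(nz, nx)) (c : 'rV[R]_nx) (sigma : R)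
  (y0 : 'rV[R]_ny) (z0 : 'rV[R]_nz) (x0 : 'rV[R]_nx) :
  0 < sigma ->
  proper_closed_convex f1 -> proper_closed_convex f2 ->
  maximal_monotone (subdiff_plus f1 sigma B1) ->
  strongly_monotone (subdiff_plus f1 sigma B1) ->
  maximal_monotone (subdiff_plus f2 sigma B2) ->
  strongly_monotone (subdiff_plus f2 sigma B2) ->
  in_dom f1 y0 -> in_dom f2 z0 ->
  (* unique solvability of both subproblems *)
  (forall (y : 'rV[R]_ny) (x : 'rV[R]_nx),
      exists! z, is_argmin (zsub f2 B1 B2 c sigma y x) z) /\
  (forall (z : 'rV[R]_nz) (x : 'rV[R]_nx),
      exists! y, is_argmin (ysub f1 B1 B2 c sigma z x) y) /\
  (* equivalence of the iterates of Algorithm I and Algorithm II *)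
  (forall (y : nat -> 'rV[R]_ny) (z : nat -> 'rV[R]_nz)
          (x xh xt : nat -> 'rV[R]_nx)
          (yw : nat -> 'rV[R]_ny) (zw : nat -> 'rV[R]_nz) (xw : nat -> 'rV[R]_nx)
          (yb : nat -> 'rV[R]_ny) (zb : nat -> 'rV[R]_nz) (xb : nat -> 'rV[R]_nx),
    (* Algorithm I; xh k stands for x^{k+1/2}, xt k for tilde x^k *)
    y 0%N = y0 -> z 0%N = z0 -> x 0%N = x0 -> xt 0%N = x0 ->
    (forall k : nat,
      [/\ is_argmin (zsub f2 B1 B2 c sigma (y k) (xt k)) (z k.+1),
          xh k = xt k + sigma *: (y k *m B1 + z k.+1 *m B2 - c),
          is_argmin (ysub f1 B1 B2 c sigma (z k.+1) (xh k)) (y k.+1),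
          x k.+1 = xh k + sigma *: (y k.+1 *m B1 + z k.+1 *m B2 - c) &
          xt k.+1 = (k.+2%:R)^-1 *: xt 0%N + (k.+1%:R / k.+2%:R) *: x k.+1
                    + (sigma / k.+2%:R) *: (y 0%N *m B1 - y k.+1 *m B1)]) ->
    (* Algorithm II; (yw k, zw k, xw k) = w^k, (yb k.+1, zb k.+1, xb k.+1) = bar w^{k+1} *)
    yw 0%N = y0 -> zw 0%N = z0 -> xw 0%N = x0 ->
    (forall k : nat,
      [/\ is_argmin (zsub f2 B1 B2 c sigma (yw k) (xw k)) (zb k.+1),
          xb k.+1 = xw k + sigma *: (yw k *m B1 + zb k.+1 *m B2 - c),
          is_argmin (ysub f1 B1 B2 c sigma (zb k.+1) (xb k.+1)) (yb k.+1),
          yw k.+1 = (k.+2%:R)^-1 *: yw 0%N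
                    + (k.+1%:R / k.+2%:R) *: (2%:R *: yb k.+1 - yw k) & 
          (zw k.+1 = (k.+2%:R)^-1 *: zw 0%N
                    + (k.+1%:R / k.+2%:R) *: (2%:R *: zb k.+1 - zw k) /\
          xw k.+1 = (k.+2%:R)^-1 *: xw 0%N
                    + (k.+1%:R / k.+2%:R) *: (2%:R *: xb k.+1 - xw k))]) ->
    forall k : nat, [/\ y k.+1 = yb k.+1, z k.+1 = zb k.+1 & xh k = xb k.+1]).
Proof.
move=> s0 hf1 hf2 hmax1 hsm1 hmax2 hsm2 hy0 hz0.
have U2 : forall y x, exists! z, is_argmin (zsub f2 B1 B2 c sigma y x) z.
  by move=> y x; rewrite zsub_Fe; exact: (Fe_unique_exists s0 hf2 hmax2 hsm2).
have U1 : forall z x, exists! y, is_argmin (ysub f1 B1 B2 c sigma z x) y.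
  by move=> z x; rewrite ysub_Fe; exact: (Fe_unique_exists s0 hf1 hmax1 hsm1).
split; first exact: U2.
split; first exact: U1.
move=> y z x xh xt yw zw xw yb zb xb Hy0 Hz0 Hx0 Hxt0 HI Hyw0 Hzw0 Hxw0 HII.
pose P k := xt k + sigma *: (y k *m B1) = xw k + sigma *: (yw k *m B1).
have step : forall k, P k -> [/\ y k.+1 = yb k.+1, z k.+1 = zb k.+1 & xh k = xb k.+1].
  move=> k Pk; have [Hz1 Hxh Hy1 Hx1 Hxt1] := HI k; have [Hzb Hxb Hyb Hyw [Hzw Hxw]] := HII k.
  rewrite zsub_Fe in Hz1; rewrite zsub_Fe in Hzb.
  have ez : z k.+1 = zb k.+1.
    apply: (Fe_same s0 hf2 hmax2 hsm2 _ Hz1 Hzb).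
    move: Pk; rewrite /P.
    move: (xt k) (xw k) (y k *m B1) (yw k *m B1) => a b u v H.
    by rewrite !scalerBr !addrA H.
  have exh : xh k = xb k.+1.
    rewrite Hxh Hxb ez; move: Pk; rewrite /P.
    move: (xt k) (xw k) (y k *m B1) (yw k *m B1) (zb k.+1 *m B2) => a b u v Z H.
    by rewrite !scalerBr !scalerDr !addrA H.
  rewrite ez exh ysub_Fe in Hy1; rewrite ysub_Fe in Hyb.
  split => //; exact: (Fe_same s0 hf1 hmax1 hsm1 (erefl _) Hy1 Hyb).
have Pall : forall k, P k.
  elim=> [|k IH]; first by rewrite /P Hxt0 Hy0 Hxw0 Hyw0.
  have [ey ez exh] := step k IH.
  have [_ _ _ Hx1 Hxt1] := HI k; have [_ Hxb _ Hyw [_ Hxw]] := HII k.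
  rewrite /P Hxt1 Hx1 exh Hyw Hxw Hxb ey ez Hxt0 Hy0 Hxw0 Hyw0.
  rewrite !mulmxDl ?mulmxBl -!scalemxAl ?mulmxDl ?mulmxBl ?mulNmx -?scalemxAl.
  have e2 : k.+2%:R = k.+1%:R + 1 :> R by rewrite natr1.
  have h0 : k.+1%:R + 1 != 0 :> R by rewrite natr1 pnatr_eq0.
  rewrite e2; move: h0.
  move: (y0 *m B1) (yb k.+1 *m B1) (yw k *m B1) (zb k.+1 *m B2) (xw k) => a1 a2 a3 a4 a5.
  move: (k.+1%:R : R) => r h0.
  by apply/rowP => i; rewrite !mxE; field.
by move=> k; exact: step.
Qed.
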